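(* Let $\mathcal{H}$ be an infinite, continuous index set of estimation tasks (with continuous estimates and errors), let $S_{\text{def}}$ be a random defining dataset with realization $s$, and for each $h\in\mathcal{H}$ let $\theta_h$ be an unknown target estimand, $\hat\theta_h=\hat\theta_h(s)$ an estimate computed from $S_{\text{def}}$, and $e_h=e_h(s)\in\mathbb{R}$ an error. Let $\mathcal{E}(s):=\{(h,\hat\theta_h(s),\theta_h,e_h(s)):h\in\mathcal{H}\}$, and given $S_{\text{def}}=s$ let $S_{\text{err}}$ be drawn from a distribution $\mathcal{D}$ (possibly depending on $s$). Suppose there are functions $\hat u(S_{\text{err}},h,\lambda)\in\mathbb{R}$ with $\Pr_{S_{\text{err}}\sim\mathcal{D}}(\hat u(S_{\text{err}},h,\lambda)\ge e_h\mid\mathcal{E}(s))\ge 1-\lambda$ for all $h\in\mathcal{H}$, $\lambda\in(0,1)$. Let $\hat\xi(S_{\text{err}},\delta):=\sup_{h\in\mathcal{H}}\hat u(S_{\text{err}},h,\delta)$. Then for any $\delta\in(0,1)$, $$\Pr_{S_{\text{err}}\sim\mathcal{D}}\Big(\hat\xi(S_{\text{err}},\delta)\ge\sup_{h\in\mathcal{H}}e_h\,\Big|\,\mathcal{E}(s)\Big)\ge 1-\delta\quad\text{and}\quad \Pr_{(S_{\text{def}},S_{\text{err}})}\Big(\hat\xi(S_{\text{err}},\delta)\ge\sup_{h\in\mathcal{H}}e_h\Big)\ge 1-\delta .$$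
   Context: Conditioning on $\mathcal{E}(s)$ means conditioning on $S_{\text{def}}=s$, so estimates and errors are fixed with respect to the randomness of $S_{\text{err}}$; $S_{\text{err}}$ is not used to construct the estimates. *)

(* Defs.v *)
From HB Require Import structures.
From mathcomp Require Import all_boot all_order all_algebra.
From mathcomp Require Import all_classical all_reals all_analysis.
From mathcomp Require Import measurable_realfun.
Set Implicit Arguments. Unset Strict Implicit. Unset Printing Implicit Defensive.
Import Order.TTheory GRing.Theory Num.Theory.
Local Open Scope classical_set_scope.
Local Open Scope ring_scope.
Local Open Scope ereal_scope.

(* Joint law of (S_def, S_err): S_def ~ P1, and given S_def = s,
   S_err ~ D s (a probability kernel). Probability of an event A. *)
Definition joint_prob (d1 d2 : measure_display) (T1 : measurableType d1)
  (T2 : measurableType d2) (R : realType) (P1 : probability T1 R)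
  (D : R.-pker T1 ~> T2) (A : set (T1 * T2)) : \bar R :=
  \int[P1]_s D s [set x | A (s, x)].

Definition xi_hat (T2 : Type) (R : realType) (H : Type)
  (u : T2 -> H -> R -> R) (x : T2) (delta : R) : \bar R :=
  ereal_sup [set (u x h delta)%:E | h in [set: H]].

Definition sup_err (T1 : Type) (R : realType) (H : Type)
  (e : H -> T1 -> R) (s : T1) : \bar R :=
  ereal_sup [set (e h s)%:E | h in [set: H]].

(* Main.v *)
Require Import Defs.
From HB Require Import structures.
From mathcomp Require Import all_boot all_order all_algebra.
From mathcomp Require Import all_classical all_reals all_analysis.
From mathcomp Require Import measurable_realfun.
Import Order.TTheory GRing.Theory Num.Theory.
Local Open Scope classical_set_scope.
Local Open Scope ring_scope.
Local Open Scope ereal_scope.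

Lemma key d (T : measurableType d) (R : realType)
  (mu : {measure set T -> \bar R}) (f : T -> \bar R) (S c : \bar R) :
  mu setT < +oo -> c <= mu setT -> measurable_fun setT f ->
  (forall r : R, r%:E < S -> c <= mu [set x | r%:E <= f x]) ->
  c <= mu [set x | S <= f x].
Proof.
move=> mufin cle mf H.
have mB : forall y : \bar R, measurable [set x | y <= f x].
  move=> y; rewrite -[X in measurable X]setTI.
  by apply: measurable_lee => //; exact: measurable_cst.
case: S H => [r| |] H; last first.
- by rewrite (_ : [set x | -oo <= f x] = setT) //; apply/seteqP; split => x //= _; rewrite leNye.
- pose B n := [set x | n%:R%:E <= f x].
  have mBn n : measurable (B n) by exact: mB.
  have eqI : \bigcap_n B n = [set x | +oo <= f x].
    apply/seteqP; split => x /=.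
    + move=> Hx; rewrite leye_eq; apply/eqP/eqyP => r r0.
      have := Hx (Num.Def.archi_bound `|r|) I; rewrite /B /=; apply: le_trans; rewrite lee_fin.
      apply: (le_trans (ler_norm r)); apply: ltW; apply: archi_boundP.
      exact: normr_ge0.
    + by move=> Hx n _; rewrite /B /=; apply: le_trans Hx; rewrite leey.
  have homo : {homo B : n m / (n <= m)%N >-> (m <= n)%O}.
    by move=> n m nm; apply/subsetPset => x; rewrite /B/=; apply: le_trans; rewrite lee_fin ler_nat.
  have fin0 : mu (B 0%N) < +oo.
    by apply: le_lt_trans mufin; apply: le_measure => //; rewrite inE.
  have mI : measurable (\bigcap_n B n) by rewrite eqI; exact: mB.
  have cv := @nonincreasing_cvg_mu _ _ _ mu B fin0 mBn mI homo.
  rewrite -eqI -(cvg_lim _ cv) //.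
  apply: lime_ge; first by apply/cvg_ex; eexists; exact: cv.
  by apply: nearW => n; apply: H; rewrite ltry.
- pose B n := [set x | (r - n.+1%:R^-1)%:E <= f x].
  have mBn n : measurable (B n) by exact: mB.
  have homo : {homo B : n m / (n <= m)%N >-> (m <= n)%O}.
    move=> n m nm; apply/subsetPset => x; rewrite /B/=; apply: le_trans; rewrite lee_fin lerD2l lerN2.
    by rewrite lef_pV2 ?posrE // ler_nat.
  have eqI : \bigcap_n B n = [set x | r%:E <= f x].
    apply/seteqP; split => x /=.
    + move=> Hx; case E: (f x) => [y| |]; last 2 first.
      * by rewrite leey.
      * by have := Hx 0%N I; rewrite /B /= E.
      rewrite lee_fin; apply/ler_addgt0Pr => e e0.
      have ie : (0 < e^-1)%R by rewrite invr_gt0.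
      have Hn := archi_boundP (ltW ie); set n := Num.Def.archi_bound _ in Hn.
      have := Hx n I; rewrite /B /= E lee_fin lerBlDr => Hy.
      apply: (le_trans Hy); rewrite lerD2l.
      rewrite -[e]invrK lef_pV2 ?posrE ?invr_gt0 //.
      by apply: (le_trans (ltW Hn)); rewrite ler_nat.
    + by move=> Hx n _; rewrite /B /=; apply: le_trans Hx; rewrite lee_fin lerBlDr lerDl invr_ge0.
  have fin0 : mu (B 0%N) < +oo.
    by apply: le_lt_trans mufin; apply: le_measure => //; rewrite inE.
  have mI : measurable (\bigcap_n B n) by rewrite eqI; exact: mB.
  have cv := @nonincreasing_cvg_mu _ _ _ mu B fin0 mBn mI homo.
  rewrite -eqI -(cvg_lim _ cv) //.
  apply: lime_ge; first by apply/cvg_ex; eexists; exact: cv.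
  by apply: nearW => n; apply: H; rewrite lte_fin ltrBlDr ltrDl invr_gt0.
Qed.

Theorem theoremD1 (R : realType) (H : Type)
  (d1 d2 : measure_display) (T1 : measurableType d1) (T2 : measurableType d2)
  (P1 : probability T1 R) (D : R.-pker T1 ~> T2)
  (theta : H -> R) (theta_hat : H -> T1 -> R) (e : H -> T1 -> R)
  (u : T2 -> H -> R -> R) (delta : R) :
  infinite_set [set: H] ->
  (forall h lambda, measurable_fun [set: T2] (fun x => u x h lambda)) ->
  (forall s h lambda, (0 < lambda < 1)%R ->
     D s [set x | (e h s <= u x h lambda)%R] >= (1 - lambda)%:E) ->
  measurable_fun [set: T2] (fun x => xi_hat u x delta) ->
  measurable_fun [set: T1] (sup_err e) ->
  (0 < delta < 1)%R ->
  (forall s, D s [set x | sup_err e s <= xi_hat u x delta] >= (1 - delta)%:E) /\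
  joint_prob P1 D [set p | sup_err e p.1 <= xi_hat u p.2 delta] >= (1 - delta)%:E.
Proof.
move=> _ mu Hu mxi mse d01.
have d0 : (0 < delta)%R by case/andP: d01.
have d1' : (delta < 1)%R by case/andP: d01.
have part1 : forall s, D s [set x | sup_err e s <= xi_hat u x delta] >= (1 - delta)%:E.
  move=> s.
  have Ds1 : D s setT = 1 by rewrite prob_kernel.
  apply: key => //; first by rewrite Ds1 ltry.
    by rewrite Ds1 lee_fin lerBlDr lerDl ltW.
  move=> r /ereal_sup_gt [y [h _ <-]] ry.
  apply: le_trans (Hu s h delta d01) _.
  have mh : measurable [set x | (e h s <= u x h delta)%R].
    have := @measurable_lee _ _ R [set: T2] measurableT (fun=> (e h s)%:E)
      (fun x => (u x h delta)%:E) (measurable_cst _) (proj2 (measurable_EFinP _ _) (mu h delta)).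
    rewrite setTI.
    by congr measurable; apply/seteqP; split => x /=; rewrite lee_fin.
  apply: le_measure; rewrite ?inE //.
    rewrite -[X in measurable X]setTI.
    by apply: measurable_lee => //; exact: measurable_cst.
  move=> x /= hx; apply: le_trans (ltW ry) _.
  apply: (@le_trans _ _ (u x h delta)%:E); first by rewrite lee_fin.
  by apply: ereal_sup_ubound; exists h.
split => //.
rewrite /joint_prob.
set A := [set p | sup_err e p.1 <= xi_hat u p.2 delta].
have mA : measurable A.
  rewrite -[A]setTI; apply: measurable_lee => //.
    exact: measurableT_comp mse measurable_fst.
  exact: measurableT_comp mxi measurable_snd.
have -> : (1 - delta)%:E = \int[P1]_s cst (1 - delta)%:E s.
  rewrite integral_cst //; apply/esym; rewrite -[X in _ = X]mule1; congr (_ * _); exact: probability_setT.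
apply: ge0_le_integral => //.
- by move=> s _; rewrite lee_fin subr_ge0 ltW.
- have := @measurable_fun_xsection_finite_kernel _ _ _ _ _ D A (mem_set mA).
  congr measurable_fun; apply/funext => s; congr (D s _).
  by apply/seteqP; split => x /=; rewrite /xsection /= in_setE.
Qed.
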